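(* Let $A$ be a finite group with a normal subgroup $G$ such that $A/G$ is cyclic. Let $X,Y\in A$ have the same image in $A/G$. Suppose that $X^2$ is conjugate to $Y^2$ in $A$ and that $X^r$ is conjugate to $Y^r$ in $A$ for some odd integer $r>1$, but that $X$ is not conjugate to $Y$ in $A$. Then $4$ divides $|G|$. *)

(* Defs.v *)
From mathcomp Require Import all_boot all_fingroup all_solvable.

(* Main.v *)
Require Import Defs.
From mathcomp Require Import all_boot all_fingroup all_solvable.
Set Implicit Arguments. Unset Strict Implicit. Unset Printing Implicit Defensive.
Local Open Scope group_scope.
Lemma odd_sq_root (gT : finGroupType) (x : gT) :
  odd #[x] -> x = (x ^+ 2) ^+ (#[x].+1)./2.
Proof.
move=> ox; rewrite -expgM.
have -> : (2 * (#[x].+1)./2)%N = #[x].+1.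
  by rewrite mul2n -[in RHS](odd_double_half #[x].+1) /= ox.
by rewrite expgS expg_order mulg1.
Qed.

Lemma odd_order_sq (gT : finGroupType) (x : gT) : odd #[x] -> #[x ^+ 2] = #[x].
Proof.
move=> ox; rewrite orderXgcd.
suff -> : gcdn #[x] 2 = 1%N by rewrite divn1.
by apply/eqP; rewrite -/(coprime _ _) coprimen2.
Qed.

Lemma odd_sq_inj (gT : finGroupType) (x y : gT) :
  odd #[x] -> odd #[y] -> x ^+ 2 = y ^+ 2 -> x = y.
Proof.
move=> ox oy e.
have exy : #[x] = #[y] by rewrite -(odd_order_sq ox) -(odd_order_sq oy) e.
by rewrite (odd_sq_root ox) (odd_sq_root oy) e exy.
Qed.
Lemma comm_cyc (gT : finGroupType) (x a b : gT) :
  a \in <[x]> -> b \in <[x]> -> commute a b.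
Proof.
by case/cycleP=> i -> /cycleP [j ->]; apply: commuteX2.
Qed.

Lemma lemO' (gT : finGroupType) (A N : {group gT}) (X Y : gT) :
  N <| A -> odd #|N| -> X \in A -> Y \in A ->
  coset N X = coset N Y -> Y ^+ 2 = X ^+ 2 -> Y \in X ^: A.
Proof.
move=> nNA oN AX AY eXY e2.
have nN : A \subset 'N(N) by case/andP: nNA.
set u := X.`_2^'.
have uY : Y.`_2^' = u.
  apply: odd_sq_inj; rewrite ?odd_2'nat; try exact: p_elt_constt.
  by rewrite -!consttX e2.
set v := X.`_2; set w := Y.`_2.
have Xvu : X = v * u by rewrite /v /u consttC.
have Ywu : Y = w * u by rewrite /w -uY consttC.
set C := 'C_A[u].
have sXA : <[X]> \subset A by rewrite cycle_subG.
have sYA : <[Y]> \subset A by rewrite cycle_subG.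
have vC : v \in C.
  rewrite inE (subsetP sXA) ?cycle_constt //; apply/cent1P.
  by apply: comm_cyc; apply: cycle_constt.
have wC : w \in C.
  rewrite inE (subsetP sYA) ?cycle_constt //; apply/cent1P.
  by rewrite -uY; apply: comm_cyc; apply: cycle_constt.
have sCA : C \subset A by apply: subsetIl.
pose K := (C :&: N)%G.
have nKC : C \subset 'N(K) by case/andP: (normalGI sCA nNA).
have KN : K \subset N by apply: subsetIr.
have oK : (2^').-nat #|K| by apply: (pnat_dvd (cardSg KN)); rewrite -odd_2'nat.
have vwK : v^-1 * w \in K.
  rewrite inE groupM ?groupV //=.
  have vN : v \in 'N(N) by apply: (subsetP nN); apply: (subsetP sCA).
  have wN : w \in 'N(N) by apply: (subsetP nN); apply: (subsetP sCA).
  apply: coset_idr; first by rewrite groupM ?groupV.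
  rewrite morphM ?groupV // morphV // /v /w.
  rewrite !morph_constt ?(subsetP nN) //.
  by rewrite -[coset_morphism N X]/(coset N X) eXY mulVg.
have vNK : <[v]> \subset 'N(K) by rewrite cycle_subG (subsetP nKC).
pose H := (<[v]> <*> K)%G.
have HE : H :=: <[v]> * K by rewrite /H /= norm_joinEl.
have sylv : 2.-Sylow(H) <[v]>.
  rewrite /pHall joing_subl /=.
  have -> : 2.-group <[v]> by apply: p_elt_constt.
  rewrite HE indexMg /=; apply: pnat_dvd oK; exact: dvdn_indexg.
have wH : <[w]> \subset H.
  rewrite cycle_subG HE -(mulKVg v w); apply: mem_mulg => //; exact: cycle_id.
have [c cH] := Sylow_subJ sylv wH (p_elt_constt _ _).
rewrite -cycleJ cycle_subG => /cycleP [j wj].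
move: cH; rewrite HE => /mulsgP [vi k /cycleP [i ->] kK def_c].
rewrite def_c in wj.
have vvi : v ^ (v ^+ i) = v.
  by rewrite conjgE (commuteX i (commute_refl v)) mulKg.
rewrite conjgM vvi -conjXg in wj.
have kNv : v ^+ j \in 'N(K) by rewrite groupX // (subsetP nKC).
have vjK : v^-1 * v ^+ j \in K.
  have : v^-1 * w * [~ v ^+ j, k]^-1 \in K.
    rewrite groupM ?groupV // commgEr groupM // memJ_norm // groupV //.
  by rewrite wj -(mulKVg (v ^+ j) (v ^+ j ^ k)) -commgEl mulgA mulgK.
have TI : <[v]> :&: K = 1.
  apply: coprime_TIg; apply: (pnat_coprime _ oK); exact: p_elt_constt.
have vjv : v ^+ j = v.
  have : v^-1 * v ^+ j \in <[v]> :&: K by rewrite in_setI vjK andbT groupM ?groupV ?mem_cycle ?cycle_id.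
  by rewrite TI => /set1P /(canRL (mulKVg _)); rewrite mulg1.
rewrite vjv in wj.
have kC : k \in C by move: kK; rewrite inE => /andP [].
have kA : k \in A by apply: (subsetP sCA).
have uk : u ^ k = u.
  move: kC; rewrite inE => /andP [_ /cent1P ck].
  by rewrite conjgE -ck mulKg.
by rewrite Ywu wj -uk -conjMg -Xvu memJ_class.
Qed.

Lemma lemO (gT : finGroupType) (A N : {group gT}) (X Y : gT) :
  N <| A -> abelian (A / N) -> odd #|N| -> X \in A -> Y \in A ->
  coset N X = coset N Y -> Y ^+ 2 \in (X ^+ 2) ^: A -> Y \in X ^: A.
Proof.
move=> nNA ab oN AX AY eXY /imsetP [a Aa e2].
have nN : A \subset 'N(N) by case/andP: nNA.
pose Z := Y ^ a^-1.
have AZ : Z \in A by rewrite groupJ ?groupV.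
have eZ : coset N Z = coset N Y.
  rewrite /Z morphJ ?(subsetP nN) ?groupV //.
  have cYa : commute (coset N Y) (coset N a^-1).
    exact: (centsP ab _ (mem_quotient N AY) _ (mem_quotient N (groupVr Aa))).
  by rewrite conjgE cYa mulKg.
have : Z \in X ^: A.
  apply: (lemO' nNA oN AX AZ); first by rewrite eXY eZ.
  by rewrite /Z -conjXg e2 conjgK.
case/imsetP=> c Ac eZc.
have -> : Y = Z ^ a by rewrite /Z conjgKV.
by rewrite eZc -conjgM memJ_class ?groupM.
Qed.
Lemma index2_exists (T : finGroupType) :
  2 %| #|T| -> odd (#|T| %/ 2) -> exists M : {group T}, (#|M| * 2 = #|T|)%N.
Proof.
move=> d2 oh.
have [t _ ot] := Cauchy (isT : prime 2) (etrans (congr1 _ (cardsT T)) d2 : 2 %| #|[set: T]|).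
pose f (x : T) := odd_perm (actperm ('R : {action T &-> T}) x).
have fM x y : f (x * y) = f x (+) f y by rewrite /f actpermM ?inE // odd_permM.
have fV x : f x^-1 = f x by rewrite /f morphV ?inE // odd_permV.
have ft : f t.
  rewrite /f /odd_perm.
  have -> : #|porbits (actperm 'R t)| = #|[set: T] : <[t]>|.
    rewrite -(card_lcosets [set: T]%G <[t]>%G); apply: eq_card => A.
    rewrite /porbits /lcosets; apply/imsetP/imsetP => [] [x _ ->];
      exists x; rewrite ?inE // (porbit_actperm 'R (in_setT t)) orbitR lcosetE //.
  have : (#|[set: T] : <[t]>| * 2)%N = #|T|.
    by rewrite -ot mulnC [#[t]]/order (Lagrange (subsetT _)) cardsT.
  move=> e; have -> : #|[set: T] : <[t]>| = (#|T| %/ 2)%N by rewrite -e mulnK.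
  by rewrite oh; move: d2; rewrite dvdn2 => /negbTE ->.
pose M := [set x | ~~ f x].
have gM : group_set M.
  apply/group_setP; split; first by rewrite inE /f morph1 odd_perm1.
  by move=> x y; rewrite !inE fM => /negbTE -> /negbTE ->.
exists (Group gM) => /=.
have CM : ~: M = M :* t.
  apply/setP=> x; rewrite mem_rcoset !inE fM fV ft.
  by case: (f x).
by rewrite -(cardsC M) CM card_rcoset muln2 addnn.
Qed.
Lemma pcore2'_index (gT : finGroupType) (G : {group gT}) :
  ~~ (4 %| #|G|) -> #|G : 'O_(2^')(G)| %| 2.
Proof.
move=> n4.
have [oG | eG] := boolP (odd #|G|).
  by rewrite pcore_pgroup_id ?indexgg // /pgroup -odd_2'nat.
have d2 : 2 %| #|G| by rewrite dvdn2.
have oh : odd (#|G| %/ 2).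
  move: n4; apply: contraR; rewrite -dvdn2 => h.
  by rewrite -(divnK d2) -[4]/(2 * 2)%N dvdn_pmul2r.
have cT : #|subg_of G| = #|G|.
  rewrite -cardsT -[in RHS]im_sgval. symmetry; apply: card_injm; [exact: injm_sgval | exact: subxx].
rewrite -cT in d2 oh.
have [M cM] := index2_exists d2 oh.
rewrite cT in cM.
pose N0 := (sgval @* M)%G.
have cN0 : #|N0| = #|M| by apply: card_injm; [exact: injm_sgval | exact: subsetT].
have sN0 : N0 \subset G by apply: sgval_sub.
have iN0 : #|G : N0| = 2.
  by rewrite -divgS // cN0 -cM mulKn ?cardG_gt0.
have nN0 : N0 <| G by apply: index2_normal.
have pN0 : (2^').-group N0.
  by rewrite /pgroup -odd_2'nat cN0; move: oh; rewrite cT -cM mulnK.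
have sN0O : N0 \subset 'O_(2^')(G) by apply: pcore_max.
have e := Lagrange_index (pcore_sub (2^') G) sN0O.
have e2 : (#|G : 'O_(2^')(G)| * #|'O_(2^')(G) : N0| = 2)%N by rewrite e -iN0.
by apply/dvdnP; exists #|'O_(2^')(G) : N0|; rewrite mulnC e2.
Qed.
Lemma quot_abelian (gT : finGroupType) (A G N : {group gT}) :
  N <| A -> G <| A -> N \subset G -> cyclic (A / G) -> #|G : N| %| 2 ->
  abelian (A / N).
Proof.
move=> nNA nGA sNG cAG i2.
have sGA : G \subset A by case/andP: nGA.
have nN : A \subset 'N(N) by case/andP: nNA.
have nGb : G / N <| A / N by apply: quotient_normal.
have cGb : #|G / N| %| 2 by rewrite card_quotient // (subset_trans sGA nN).
apply: (@cyclic_factor_abelian _ (G / N)%G).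
  rewrite /center subsetI (normal_sub nGb) /=.
  apply/centsP => z Gz a Aa.
  have [-> | nz] := eqVneq z 1; first exact: commute_sym (commute1 _).
  have Gza : z ^ a \in G / N by rewrite memJ_norm // (subsetP (normal_norm nGb)).
  have e : G / N = [set 1; z].
    apply/eqP; rewrite eq_sym eqEcard.
    apply/andP; split.
      by apply/subsetP => y; rewrite !inE => /orP [] /eqP ->; rewrite ?group1.
    rewrite cards2 eq_sym nz.
    by apply: dvdn_leq.
  move: Gza; rewrite e !inE conjg_eq1 (negbTE nz) /= => /eqP za.
  by apply/commgP/conjg_fixP.
rewrite (isog_cyclic (third_isog sNG nNA nGA)).
exact: cAG.
Qed.
Theorem lemma6p4 (gT : finGroupType) (A G : {group gT}) (X Y : gT) (r : nat) :
  G <| A -> cyclic (A / G) ->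
  X \in A -> Y \in A -> coset G X = coset G Y ->
  Y ^+ 2 \in (X ^+ 2) ^: A ->
  odd r -> 1 < r -> Y ^+ r \in (X ^+ r) ^: A ->
  Y \notin X ^: A ->
  (4 %| #|G|)%N.
Proof.
move=> nGA cAG AX AY eG Y2 odr _ Yr nXY.
case: (boolP (4 %| #|G|)%N) => // n4; case/negP: nXY.
pose N := 'O_(2^')(G).
have nNA : N <| A := char_normal_trans (pcore_char _ _) nGA.
have sNG : N \subset G := pcore_sub _ _.
have oN : odd #|N| by rewrite odd_2'nat; apply: pcore_pgroup.
have iN := pcore2'_index n4.
have ab := quot_abelian nNA nGA sNG cAG iN.
have sGA : G \subset A by case/andP: nGA.
have nN : A \subset 'N(N) by case/andP: nNA.
have nG : A \subset 'N(G) by case/andP: nGA.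
apply: (lemO nNA ab oN AX AY) => //.
pose g := X^-1 * Y.
have gG : g \in G.
  apply: coset_idr; first by rewrite (subsetP nG) // groupM ?groupV.
  by rewrite morphM ?morphV ?groupV ?(subsetP nG) // -[coset_morphism G X]/(coset G X) eG mulVg.
have Yg : Y = X * g by rewrite /g mulKVg.
have gA : g \in A by apply: (subsetP sGA).
have cg1 : coset N g = 1.
  case/imsetP: Yr => b Ab eb.
  have e1 : coset N (Y ^+ r) = coset N (X ^+ r).
    rewrite eb morphJ ?(subsetP nN) ?groupX //.
    have cc : commute (coset N (X ^+ r)) (coset N b).
      exact: (centsP ab _ (mem_quotient N (groupX r AX)) _ (mem_quotient N Ab)).
    by rewrite conjgE cc mulKg.
  have cXg : commute (coset N X) (coset N g).
    exact: (centsP ab _ (mem_quotient N AX) _ (mem_quotient N gA)).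
  rewrite !morphX ?(subsetP nN) // Yg morphM ?(subsetP nN) // expgMn // in e1.
  have gr : coset N g ^+ r = 1 by apply: (mulgI (coset N X ^+ r)); rewrite mulg1.
  have g2 : coset N g ^+ 2 = 1.
    apply/eqP; rewrite -order_dvdn; apply: dvdn_trans (order_dvdG (mem_quotient N gG)) _.
    by rewrite card_quotient ?(subset_trans sGA nN).
  rewrite -(odd_double_half r) odr /= in gr.
  by rewrite expgS -muln2 mulnC expgM g2 expg1n mulg1 in gr.
by rewrite Yg morphM ?(subsetP nN) // -[coset_morphism N g]/(coset N g) cg1 mulg1.
Qed.
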